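(* Let $S$ be a semigroup, $T$ an ideal of $S$ and $U=S/T$ the Rees quotient. Let $\langle A\mid R\rangle$ be a finite complete semigroup presentation of $T$ and $\langle B\mid Q\rangle$ a finite complete semigroup presentation of $U$, where $A\cap B=\emptyset$. Let $B_0\subseteq B$ be the set of letters representing the zero of $U$, and $Q_0\subseteq Q$ the set of rules $(u,v)$ for which $u$ (equivalently $v$) represents the zero of $U$; assume $B_0$ contains a letter $0$ which is the unique $Q$-irreducible word representing the zero of $U$. Words over $A\cup (B\setminus B_0)$ represent elements of $S$ in the natural way (letters of $A$ represent elements of $T$ via the given presentation; letters of $B\setminus B_0$ represent the corresponding nonzero elements of $U$, identified with elements of $S\setminus T$). For each $u\in(B\setminus B_0)^+$ representing the zero of $U$ fix $\rho(u)\in A^+$ with $u=\rho(u)$ in $S$, and for $a\in A$, $b\in B\setminus B_0$ fix $\sigma(a,b),\pi(b,a)\in A^+$ with $ab=\sigma(a,b)$ and $ba=\pi(b,a)$ in $S$. Let $V$ be the rewriting system on $A\cup(B\setminus B_0)$ consisting of $R$, $Q\setminus Q_0$, and the rules $u\to\rho(u)$ (for $u\in(B\setminus B_0)^+$ such that $(u,v)\in Q_0$ or $(v,u)\in Q_0$ for some $v$), $ab\to\sigma(a,b)$ and $ba\to\pi(b,a)$ ($a\in A$, $b\in B\setminus B_0$). Then for every word $w\in(A\cup B\setminus B_0)^+$: (i) if $w$ represents an element of $T$, then there is $w'\in A^+$ with $w\to_V^* w'$; (ii) otherwise $w\in(B\setminus B_0)^+$.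
   Context: For a rewriting system $V$, $\to_V$ denotes one-step reduction ($w_1uw_2\to_V w_1vw_2$ for a rule $u\to v$ in $V$) and $\to_V^*$ its reflexive transitive closure. A rewriting system is complete if it is noetherian (no infinite reduction chains) and confluent. The Rees quotient $S/T$ identifies all elements of $T$ to a single zero. *)

(* Defs.v *)
From mathcomp Require Import all_boot.
From Stdlib Require Export Relations.Relation_Operators.

Set Implicit Arguments.
Unset Strict Implicit.
Unset Printing Implicit Defensive.

Definition rw_step (X : Type) (rules : seq X * seq X -> Prop) (u v : seq X) : Prop :=
  exists w1 w2 l r, rules (l, r) /\ u = w1 ++ l ++ w2 /\ v = w1 ++ r ++ w2.

Definition rw_star (X : Type) (rules : seq X * seq X -> Prop) : seq X -> seq X -> Prop :=
  clos_refl_trans (seq X) (rw_step rules).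

Definition noetherian (X : Type) (rules : seq X * seq X -> Prop) : Prop :=
  well_founded (fun v u => rw_step rules u v).

Definition confluent (X : Type) (rules : seq X * seq X -> Prop) : Prop :=
  forall w u v, rw_star rules w u -> rw_star rules w v ->
    exists z, rw_star rules u z /\ rw_star rules v z.

Definition complete (X : Type) (rules : seq X * seq X -> Prop) : Prop :=
  noetherian rules /\ confluent rules.

Definition irreducible (X : Type) (rules : seq X * seq X -> Prop) (w : seq X) : Prop :=
  ~ exists v, rw_step rules w v.

Definition of_seq (X : eqType) (R : seq (seq X * seq X)) : seq X * seq X -> Prop :=
  fun r => r \in R.

Definition evalw (X Y : Type) (mulY : Y -> Y -> Y) (f : X -> Y) (w : seq X) : option Y :=
  match w with
  | [::] => None
  | x :: w' => Some (foldl (fun acc y => mulY acc (f y)) (f x) w')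
  end.

(* <X | rules> is a (semigroup) presentation of the subsemigroup P of (Y, mulY)
   via the generator map f : X -> Y: rules are pairs of nonempty words,
   the generators land in P, every element of P is the value of a (nonempty) word,
   and two nonempty words have the same value iff they are equivalent under the
   congruence generated by the rules. *)
Definition is_presentation (X : eqType) (Y : Type) (mulY : Y -> Y -> Y)
    (P : Y -> Prop) (f : X -> Y) (rules : seq (seq X * seq X)) : Prop :=
  [/\ forall r, r \in rules -> r.1 != [::] /\ r.2 != [::],
      forall x, P (f x),
      forall y, P y -> exists w, evalw mulY f w = Some y &
      forall u v, u != [::] -> v != [::] ->
        (evalw mulY f u = evalw mulY f v <->
         clos_refl_sym_trans (seq X) (rw_step (of_seq rules)) u v)].

Definition is_ideal (S : Type) (mul : S -> S -> S) (T : pred S) : Prop :=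
  forall x y, T y -> T (mul x y) /\ T (mul y x).

(* Rees quotient S/T modelled on option S: [Some s] (s not in T) is the class
   of s, and [None] is the zero. *)
Definition reesmul (S : Type) (mul : S -> S -> S) (T : pred S) (x y : option S)
  : option S :=
  match x, y with
  | Some a, Some b => if T (mul a b) then None else Some (mul a b)
  | _, _ => None
  end.

Definition rees_elt (S : Type) (T : pred S) (x : option S) : Prop :=
  match x with None => True | Some s => ~~ T s end.

(* value in S of a letter of A + B (None for letters of B0) *)
Definition valS (S : Type) (A B : Type) (psi : A -> S) (phi : B -> option S)
    (x : A + B) : option S :=
  match x with inl a => Some (psi a) | inr b => phi b end.

(* value in S of a word over A + B; None if empty or if it contains a letter of B0 *)
Definition evalS (S : Type) (mul : S -> S -> S) (A B : Type) (psi : A -> S)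
    (phi : B -> option S) (w : seq (A + B)) : option S :=
  match w with
  | [::] => None
  | x :: w' => foldl (fun acc y => obind (fun a => omap (mul a) (valS psi phi y)) acc)
                     (valS psi phi x) w'
  end.

Definition nzB (S B : Type) (phi : B -> option S) (b : B) : bool := isSome (phi b).

Definition Vrules (S : Type) (mul : S -> S -> S) (T : pred S) (A B : finType)
    (phi : B -> option S) (R : seq (seq A * seq A)) (Q : seq (seq B * seq B))
    (rho : seq B -> seq A) (sigma : A -> B -> seq A) (pi : B -> A -> seq A)
    (r : seq (A + B) * seq (A + B)) : Prop :=
  let evalU := evalw (reesmul mul T) phi in
  (exists l r', (l, r') \in R /\ r = (map inl l, map inl r'))
  \/ (exists q, q \in Q /\ evalU q.1 <> Some None /\ r = (map inr q.1, map inr q.2))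
  \/ (exists u, u != [::] /\ all (nzB phi) u /\
        (exists q, q \in Q /\ evalU q.1 = Some None /\ (u = q.1 \/ u = q.2)) /\
        r = (map inr u, map inl (rho u)))
  \/ (exists a b, nzB phi b /\ r = ([:: inl a; inr b], map inl (sigma a b)))
  \/ (exists a b, nzB phi b /\ r = ([:: inr b; inl a], map inl (pi b a))).

(* Main.v *)
Require Import Defs.
From mathcomp Require Import all_boot.
From Stdlib Require Import Classical.
Set Implicit Arguments.

Lemma foldl_rees_None (S B : Type) (mul : S -> S -> S) (T : pred S) (phi : B -> option S) u :
  foldl (fun acc y => reesmul mul T acc (phi y)) None u = None.
Proof. by elim: u. Qed.

Lemma foldl_rees_zero (S B : Type) (mul : S -> S -> S) (T : pred S) (phi : B -> option S) u acc :
  ~~ all (nzB phi) u -> foldl (fun acc y => reesmul mul T acc (phi y)) acc u = None.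
Proof.
elim: u acc => [//|b u IH] acc /=; rewrite negb_and => /orP [Hb|Hu].
  have -> : reesmul mul T acc (phi b) = None.
    by move: Hb; rewrite /nzB; case: (phi b) => //; case: acc.
  exact: foldl_rees_None.
exact: IH.
Qed.

Lemma evalU_zero (S B : Type) (mul : S -> S -> S) (T : pred S) (phi : B -> option S) r :
  r <> [::] -> ~~ all (nzB phi) r -> evalw (reesmul mul T) phi r = Some None.
Proof.
case: r => [//|b r] _ /=; rewrite negb_and => /orP [Hb|Hu].
  have -> : phi b = None by move: Hb; rewrite /nzB; case: (phi b).
  by rewrite foldl_rees_None.
by rewrite foldl_rees_zero.
Qed.

Definition isl (A B : Type) (x : A + B) : bool := if x is inl _ then true else false.
Arguments isl {A B}.

Lemma split_adj (A B : Type) (w : seq (A + B)) :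
  has (@isl A B) w -> ~~ all (@isl A B) w ->
  exists w1 w2 a b, w = w1 ++ [:: inl a; inr b] ++ w2 \/ w = w1 ++ [:: inr b; inl a] ++ w2.
Proof.
elim: w => [//|x w IH] /= Hh Ha.
case: x Hh Ha => [a|b] /= Hh Ha.
  case: w IH Hh Ha => [//|y w] IH Hh Ha.
  case: y IH Hh Ha => [a'|b'] IH Hh Ha.
    have [w1 [w2 [a0 [b0 H]]]] := IH isT Ha.
    exists (inl a :: w1), w2, a0, b0.
    by case: H => ->; [left|right].
  by exists [::], w, a, b'; left.
case: w IH Hh Ha => [//|y w] IH Hh Ha.
case: y IH Hh Ha => [a'|b'] IH Hh Ha.
  by exists [::], w, a', b; right.
have [w1 [w2 [a0 [b0 H]]]] := IH Hh isT.
exists (inr b :: w1), w2, a0, b0.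
by case: H => ->; [left|right].
Qed.

Lemma all_isl_map (A B : Type) (w : seq (A + B)) :
  all (@isl A B) w -> exists w', w = map inl w'.
Proof.
elim: w => [|x w IH] /=; first by exists [::].
case: x => [a|//] /= /IH [w' ->]; by exists (a :: w').
Qed.

Lemma no_isl_map (A B : Type) (w : seq (A + B)) :
  ~~ has (@isl A B) w -> exists w', w = map inr w'.
Proof.
elim: w => [|x w IH] /=; first by exists [::].
case: x => [//|b] /= /IH [w' ->]; by exists (b :: w').
Qed.
Arguments all_isl_map {A B w}.
Arguments no_isl_map {A B w}.
Arguments split_adj {A B w}.
Definition validx (S B A : Type) (phi : B -> option S) (x : A + B) : bool :=
  match x with inl _ => true | inr b => nzB phi b end.
Arguments validx {S B A}.


Lemma absorb (S : Type) (mul : S -> S -> S) (T : pred S) (A B : finType)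
    (phi : B -> option S) (R : seq (seq A * seq A)) (Q : seq (seq B * seq B))
    (rho : seq B -> seq A) (sigma : A -> B -> seq A) (pi : B -> A -> seq A)
    (sigmaP : forall a b, nzB phi b -> sigma a b != [::])
    (piP : forall a b, nzB phi b -> pi b a != [::]) :
  forall n (w : seq (A + B)), count (fun x => ~~ isl x) w = n ->
    all (validx phi) w -> has (@isl A B) w ->
    exists w' : seq A, w' != [::] /\
      rw_star (Vrules mul T phi R Q rho sigma pi) w (map inl w').
Proof.
elim=> [|n IH] w Hc Hv Hh.
  have Ha : all (@isl A B) w.
    apply/allP => x xw; apply/negPn; move: Hc => /eqP; rewrite -leqn0 leqNgt -has_count.
    by move=> /hasPn /(_ x xw).
  have [w' Hw'] := all_isl_map Ha.
  exists w'; split; last by rewrite Hw'; apply: rt_refl.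
  by move: Hh; rewrite Hw'; case: (w').
have Hna : ~~ all (@isl A B) w.
  rewrite -has_predC has_count Hc //.
have [w1 [w2 [a [b [E|E]]]]] := split_adj Hh Hna.
- have Hb : nzB phi b.
    by move: Hv; rewrite E !all_cat /= andbT => /and3P [_ -> _].
  have Hc' : count (fun x => ~~ isl x) (w1 ++ map inl (sigma a b) ++ w2) = n.
    move: Hc; rewrite E !count_cat /= count_map.
    have -> : count (preim inl (fun x : A + B => ~~ isl x)) (sigma a b) = 0.
      by apply/eqP; rewrite -leqn0 leqNgt -has_count; apply/hasPn.
    by rewrite addn0 add0n addnS => [[]].
  have Hv' : all (validx phi) (w1 ++ map inl (sigma a b) ++ w2).
    rewrite !all_cat; move: Hv; rewrite E !all_cat /= => /and3P [-> _ ->]; rewrite andbT.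
    by apply/allP => x /mapP [y _ ->].
  have Hh' : has isl (w1 ++ map inl (sigma a b) ++ w2).
    rewrite !has_cat; apply/orP; right; apply/orP; left.
    by case: (sigma a b) (sigmaP a b Hb) => [//|y s] _.
  have [w' [H1 H2]] := IH _ Hc' Hv' Hh'.
  exists w'; split => //.
  apply: rt_trans H2; apply: rt_step.
  exists w1, w2, [:: inl a; inr b], (map inl (sigma a b)); split; last by [].
  by right; right; right; left; exists a, b.
- have Hb : nzB phi b.
    by move: Hv; rewrite E !all_cat /= andbT => /and3P [_ -> _].
  have Hc' : count (fun x => ~~ isl x) (w1 ++ map inl (pi b a) ++ w2) = n.
    move: Hc; rewrite E !count_cat /= count_map.
    have -> : count (preim inl (fun x : A + B => ~~ isl x)) (pi b a) = 0.
      by apply/eqP; rewrite -leqn0 leqNgt -has_count; apply/hasPn.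
    by rewrite addn0 add0n addSn addnS => [[]].
  have Hv' : all (validx phi) (w1 ++ map inl (pi b a) ++ w2).
    rewrite !all_cat; move: Hv; rewrite E !all_cat /= => /and3P [-> _ ->]; rewrite andbT.
    by apply/allP => x /mapP [y _ ->].
  have Hh' : has isl (w1 ++ map inl (pi b a) ++ w2).
    rewrite !has_cat; apply/orP; right; apply/orP; left.
    by case: (pi b a) (piP a b Hb) => [//|y s] _.
  have [w' [H1 H2]] := IH _ Hc' Hv' Hh'.
  exists w'; split => //.
  apply: rt_trans H2; apply: rt_step.
  exists w1, w2, [:: inr b; inl a], (map inl (pi b a)); split; last by [].
  by right; right; right; right; exists a, b.
Qed.

Lemma foldlS_some (S : Type) (mul : S -> S -> S) (T : pred S) (A B : Type)
   (psi : A -> S) (phi : B -> option S)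
   (Tid : is_ideal mul T) (HT : forall a, T (psi a)) :
  forall (w : seq (A + B)) s, all (validx phi) w ->
  exists s', foldl (fun acc y => obind (fun a => omap (mul a) (valS psi phi y)) acc) (Some s) w = Some s'
     /\ (T s -> T s') /\ (has isl w -> T s').
Proof.
elim=> [|x w IH] s /=; first by move=> _; exists s.
case: x => [a|b] /=.
  move=> Hw; have [s' [H1 [H2 H3]]] := IH (mul s (psi a)) Hw.
  exists s'; split => //; split => [Ts|_]; apply: H2; exact: (Tid _ _ (HT a)).1.
rewrite /nzB; case E: (phi b) => [t|//] /= Hw.
have [s' [H1 [H2 H3]]] := IH (mul s t) Hw.
exists s'; split => //; split => // Ts; apply: H2; exact: (Tid _ _ Ts).2.
Qed.

Lemma evalS_inT (S : Type) (mul : S -> S -> S) (T : pred S) (A B : Type)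
   (psi : A -> S) (phi : B -> option S)
   (Tid : is_ideal mul T) (HT : forall a, T (psi a)) (w : seq (A + B)) :
  all (validx phi) w -> has isl w -> exists s, evalS mul psi phi w = Some s /\ T s.
Proof.
case: w => [//|x w] /=.
case: x => [a|b] /=.
  move=> Hw _; have [s' [H1 [H2 H3]]] := @foldlS_some S mul T A B psi phi Tid HT w (psi a) Hw.
  by exists s'; split => //; apply: H2.
rewrite /nzB; case E: (phi b) => [t|//] /= Hw Hh.
have [s' [H1 [H2 H3]]] := @foldlS_some S mul T A B psi phi Tid HT w t Hw.
by exists s'; split => //; apply: H3.
Qed.

Definition invSU (S : Type) (T : pred S) (aS aU : option (option S)) : Prop := True.

Lemma foldl_rel (S : Type) (mul : S -> S -> S) (T : pred S) (A B : Type)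
   (psi : A -> S) (phi : B -> option S)
   (Tid : is_ideal mul T) (HU : forall b, rees_elt T (phi b)) :
  forall (u : seq B) aS aU,
  ((exists s, aS = Some s /\ aU = Some s /\ ~~ T s) \/ (aU = None /\ exists s, aS = Some s /\ T s)) ->
  all (nzB phi) u ->
  let rS := foldl (fun acc y => obind (fun a => omap (mul a) (valS psi phi y)) acc) aS (map inr u) in
  let rU := foldl (fun acc y => reesmul mul T acc (phi y)) aU u in
  ((exists s, rS = Some s /\ rU = Some s /\ ~~ T s) \/ (rU = None /\ exists s, rS = Some s /\ T s)).
Proof.
elim=> [|b u IH] aS aU Hinv /=; first by [].
rewrite /nzB; case E: (phi b) => [t|//] /= Hu.
apply: IH Hu.
case: Hinv => [[s [-> [-> Ts]]]|[-> [s [-> Ts]]]] /=; try rewrite E /=.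
  case Tst: (T (mul s t)); [right|left]; first by split => //; exists (mul s t).
  by exists (mul s t); rewrite Tst.
by right; split => //; exists (mul s t); split => //; exact: (Tid _ _ Ts).2.
Qed.

Lemma evalS_inr_zero (S : Type) (mul : S -> S -> S) (T : pred S) (A B : Type)
   (psi : A -> S) (phi : B -> option S)
   (Tid : is_ideal mul T) (HU : forall b, rees_elt T (phi b)) (u : seq B) s :
  all (nzB phi) u -> evalS mul psi phi (map (@inr A B) u) = Some s -> T s ->
  evalw (reesmul mul T) phi u = Some None.
Proof.
case: u => [//|b u] /=.
rewrite /nzB; case E: (phi b) => [t|//] /= Hu Hs Ts.
have Ht : ~~ T t by have := HU b; rewrite E.
have := @foldl_rel S mul T A B psi phi Tid HU u (Some t) (Some t).
case.
- by left; exists t.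
- exact: Hu.
- by move=> [s' [H1 [_ H3]]]; move: H1 H3; rewrite Hs => [[<-]]; rewrite Ts.
- by move=> [-> _].
Qed.

Lemma all_valid_inr (S A B : Type) (phi : B -> option S) (u : seq B) :
  all (validx phi) (map (@inr A B) u) = all (nzB phi) u.
Proof. by elim: u => //= b u ->. Qed.

Theorem lemma3p1
  (S : Type) (mul : S -> S -> S) (mulA : associative mul)
  (T : pred S) (T_ideal : is_ideal mul T)
  (A B : finType)
  (psi : A -> S) (R : seq (seq A * seq A))
  (presT : is_presentation mul (fun s => T s) psi R)
  (complR : complete (of_seq R))
  (phi : B -> option S) (Q : seq (seq B * seq B))
  (presU : is_presentation (reesmul mul T) (rees_elt T) phi Q)
  (complQ : complete (of_seq Q))
  (zero_unique : exists z : B, phi z = None /\ irreducible (of_seq Q) [:: z] /\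
      forall w : seq B, irreducible (of_seq Q) w ->
        evalw (reesmul mul T) phi w = Some None -> w = [:: z])
  (rho : seq B -> seq A) (sigma : A -> B -> seq A) (pi : B -> A -> seq A)
  (rhoP : forall u : seq B, u != [::] -> all (nzB phi) u ->
      evalw (reesmul mul T) phi u = Some None ->
      rho u != [::] /\ evalS mul psi phi (map inl (rho u)) = evalS mul psi phi (map inr u))
  (sigmaP : forall (a : A) (b : B), nzB phi b ->
      sigma a b != [::] /\
      evalS mul psi phi (map inl (sigma a b)) = evalS mul psi phi [:: inl a; inr b])
  (piP : forall (a : A) (b : B), nzB phi b ->
      pi b a != [::] /\
      evalS mul psi phi (map inl (pi b a)) = evalS mul psi phi [:: inr b; inl a]) :
  forall w : seq (A + B), w != [::] ->
    all (fun x => match x with inl _ => true | inr b => nzB phi b end) w ->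
    ((exists s, evalS mul psi phi w = Some s /\ T s) ->
       exists w' : seq A, w' != [::] /\
         rw_star (Vrules mul T phi R Q rho sigma pi) w (map inl w'))
    /\
    (~ (exists s, evalS mul psi phi w = Some s /\ T s) ->
       exists u : seq B, w = map inr u).
Proof.
move=> w Hne Hall.
have Hall' : all (validx phi) w := Hall.
case: presT => _ HpsiT _ _.
case: presU => HQ1 HUelt _ HQ4.
have sigmaP' : forall a b, nzB phi b -> sigma a b != [::] := fun a b H => (sigmaP a b H).1.
have piP' : forall a b, nzB phi b -> pi b a != [::] := fun a b H => (piP a b H).1.
have absorb' := @absorb S mul T A B phi R Q rho sigma pi sigmaP' piP'.
have key : forall u : seq B, u <> [::] -> all (nzB phi) u ->
    evalw (reesmul mul T) phi u = Some None ->
    exists w', w' != [::] /\ rw_star (Vrules mul T phi R Q rho sigma pi) (map inr u) (map inl w').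
  elim/(well_founded_ind (proj1 complQ)) => u IH Hu Hnz Hz.
  case: (classic (exists v, rw_step (of_seq Q) u v)) => [[v Hst]|Hirr]; last first.
    have [z [Hz0 [_ Huniq]]] := zero_unique.
    by move: Hnz; rewrite (Huniq u Hirr Hz) /= /nzB Hz0.
  have [w1 [w2 [l [r [Hlr [Eu Ev]]]]]] := Hst.
  have [Hl Hr] := HQ1 _ Hlr.
  rewrite /= in Hl Hr.
  have Hnzl : all (nzB phi) l by move: Hnz; rewrite Eu !all_cat => /and3P [].
  have [El|El] : evalw (reesmul mul T) phi l = Some None \/ evalw (reesmul mul T) phi l <> Some None.
    by case: (evalw (reesmul mul T) phi l) => [[x|]|]; [right|left|right].
  {
    have [Hrho _] := rhoP l Hl Hnzl El.
    set w0 := map inr w1 ++ map inl (rho l) ++ map inr w2.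
    have Hv0 : all (validx phi) w0.
      move: Hnz; rewrite Eu /w0 !all_cat !all_valid_inr => /and3P [-> _ ->]; rewrite andbT.
      by apply/allP => y /mapP [? _ ->].
    have Hh0 : has isl w0.
      rewrite /w0 !has_cat; apply/orP; right; apply/orP; left.
      by case: (rho l) Hrho => [//|y s] _.
    have [w' [H1 H2]] := absorb' _ w0 erefl Hv0 Hh0.
    exists w'; split => //.
    apply: rt_trans H2; apply: rt_step.
    exists (map inr w1), (map inr w2), (map inr l), (map inl (rho l)); split.
      right; right; left; exists l; split => //; split => //; split => //.
      by exists (l, r); split => //; split => //; left.
    by rewrite Eu !map_cat. }
  have Hlr' : evalw (reesmul mul T) phi l = evalw (reesmul mul T) phi r by
    apply/(HQ4 l r Hl Hr); apply: rst_step; exists [::], [::], l, r; rewrite /= !cats0.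
  have Hnzr : all (nzB phi) r.
    apply/negPn/negP => Hc; apply: El; rewrite Hlr'; apply: evalU_zero Hc.
    by move=> E; move: Hr; rewrite E.
  have Hvne : v != [::] by rewrite Ev; case: (w1) => //; case: (r) Hr.
  have Hune : u != [::] by apply/eqP.
  have Huv : evalw (reesmul mul T) phi u = evalw (reesmul mul T) phi v by
    apply/(HQ4 u v Hune Hvne); apply: rst_step.
  have Hnzv : all (nzB phi) v by
    move: Hnz; rewrite Eu Ev !all_cat => /and3P [-> _ ->]; rewrite Hnzr.
  have [w' [H1 H2]] := IH v Hst (ltac:(by move=> E; move: Hvne; rewrite E)) Hnzv (etrans (esym Huv) Hz).
  exists w'; split => //.
  apply: rt_trans H2; apply: rt_step.
  exists (map inr w1), (map inr w2), (map inr l), (map inr r); split;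
    last by rewrite Eu Ev !map_cat.
  right; left; exists (l, r); split => //; split => //=.
split.
- move=> [s [Hs Ts]]; case Hh: (has isl w).
    exact: absorb' _ w erefl Hall' Hh.
  have [u Eu] := no_isl_map (negbT Hh).
  move: Hall' Hs Hne; rewrite Eu all_valid_inr => Hnz Hs Hne.
  apply: key => //; first by move=> E; move: E Hne => ->.
  exact: (@evalS_inr_zero S mul T A B psi phi T_ideal HUelt u s Hnz Hs Ts).
- move=> Hn; case Hh: (has isl w).
    by exfalso; apply: Hn; apply: (@evalS_inT S mul T A B psi phi T_ideal HpsiT w Hall' Hh).
  exact: no_isl_map (negbT Hh).
Qed.
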